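(* In the setting where, in the inertial frame of the City (speed of light $c$), a Caravan leaves the City at time $0$ with constant velocity $V_c$, and a Messenger, after riding with the Caravan until the Caravan's proper time equals $T_1>0$, shuttles between Caravan and City at constant speed $V_m$ with instantaneous turnarounds, where $0<V_c<V_m<c$ and $q=\frac{V_c}{V_m-V_c}$: the Messenger's proper time $T_{n,\mathrm{Mes}}$ at his $n$-th departure from the Caravan ($n\ge1$) is $$T_{n,\mathrm{Mes}}=\rho\,T_1(1+2q)^{n-1}+(1-\rho)\,T_1,\qquad \rho=\frac{\sqrt{1-V_m^2/c^2}}{\sqrt{1-V_c^2/c^2}}.$$
   Context: Proper time of an observer moving with velocity $\vec v(\tau)$ in an inertial frame is $\int_0^t\sqrt{1-|\vec v(\tau)|^2/c^2}\,d\tau$. All clocks (City, Caravan, Messenger) are synchronized at the origin at time $0$. Before leaving the Caravan the Messenger moves with it at velocity $V_c$. *)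

(* Defs.v *)
From Stdlib Require Import Reals Lra.
Open Scope R_scope.

Definition q_ratio (Vc Vm : R) : R := Vc / (Vm - Vc).

Definition rho (c Vc Vm : R) : R :=
  sqrt (1 - Vm ^ 2 / c ^ 2) / sqrt (1 - Vc ^ 2 / c ^ 2).

Definition dtau (c : R) (v : R -> R) : R -> R :=
  fun t => sqrt (1 - (v t) ^ 2 / c ^ 2).

(* Main.v *)
Require Import Defs.
From Stdlib Require Import Reals Lra Lia.
Open Scope R_scope.

Lemma const_open_integrable (f : R -> R) (a b k : R) :
  a <= b -> (forall x, a < x < b -> f x = k) -> Riemann_integrable f a b.
Proof.
  intros Hab Hf.
  assert (HS : IsStepFun f a b).
  { exists (cons a (cons b nil)). exists (cons k nil).
    destruct (StepFun_P3 k Hab) as [H1 [H2 [H3 [H4 H5]]]].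
    repeat split; try assumption.
    intros i Hi x Hx. simpl in Hi. assert (i = 0%nat) by lia. subst i.
    simpl in Hx. unfold open_interval in Hx. simpl. apply Hf.
    lra. }
  intro eps. exists (mkStepFun HS). exists (mkStepFun (StepFun_P4 a b 0)).
  split.
  - intros t _. simpl. unfold fct_cte. rewrite Rminus_diag, Rabs_R0. lra.
  - rewrite StepFun_P18, Rmult_0_l, Rabs_R0. apply cond_pos.
Qed.

Lemma const_open_int (f : R -> R) (a b k : R) (pr : Riemann_integrable f a b) :
  a <= b -> (forall x, a < x < b -> f x = k) -> RiemannInt pr = k * (b - a).
Proof.
  intros Hab Hf.
  rewrite (RiemannInt_P18 pr (RiemannInt_P14 a b k) Hab).
  - apply RiemannInt_P15.
  - intros; unfold fct_cte; auto.
Qed.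

Theorem mainTheorem3 (c Vc Vm T1 : R) (d a : nat -> R) (v : R -> R)
  (hVc : 0 < Vc) (hVcm : Vc < Vm) (hVm : Vm < c) (hT1 : 0 < T1)
  (hd1 : d 1%nat * sqrt (1 - Vc ^ 2 / c ^ 2) = T1)
  (ha : forall n : nat, (1 <= n)%nat -> Vm * (a n - d n) = Vc * d n)
  (hd : forall n : nat, (1 <= n)%nat -> Vm * (d (S n) - a n) = Vc * d (S n))
  (hv0 : forall t, 0 <= t < d 1%nat -> v t = Vc)
  (hv1 : forall (n : nat) t, (1 <= n)%nat -> d n <= t < a n -> v t = - Vm)
  (hv2 : forall (n : nat) t, (1 <= n)%nat -> a n <= t < d (S n) -> v t = Vm)
  (n : nat) (hn : (1 <= n)%nat) :
  exists pr : Riemann_integrable (dtau c v) 0 (d n),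
    RiemannInt pr =
      rho c Vc Vm * T1 * (1 + 2 * q_ratio Vc Vm) ^ (n - 1)
      + (1 - rho c Vc Vm) * T1.
Proof.
  set (sc := sqrt (1 - Vc ^ 2 / c ^ 2)).
  set (sm := sqrt (1 - Vm ^ 2 / c ^ 2)).
  set (Q := 1 + 2 * q_ratio Vc Vm).
  assert (hc : 0 < c) by lra.
  assert (hsc : 0 < sc).
  { unfold sc. apply sqrt_lt_R0.
    assert (Vc ^ 2 / c ^ 2 < 1).
    { apply (Rmult_lt_reg_r (c ^ 2)). nra. unfold Rdiv.
      rewrite Rmult_assoc, Rinv_l by nra. nra. }
    lra. }
  assert (hd1pos : 0 < d 1%nat).
  { destruct (Rlt_or_le 0 (d 1%nat)); auto. fold sc in hd1.
    assert (d 1%nat * sc <= 0) by (rewrite <- (Rmult_0_l sc); apply Rmult_le_compat_r; lra). lra. }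
  assert (hQ : Q = (Vm + Vc) / (Vm - Vc)).
  { unfold Q, q_ratio. field. lra. }
  assert (hstep : forall m, (1 <= m)%nat -> 0 < d m ->
     d m <= a m <= d (S m) /\ d (S m) = d m * Q).
  { intros m Hm Hp. pose proof (ha m Hm). pose proof (hd m Hm).
    assert (Ea : a m = d m * (Vm + Vc) / Vm).
    { apply (Rmult_eq_reg_l Vm); [| lra]. field_simplify; lra. }
    assert (Ed : d (S m) = d m * Q).
    { rewrite hQ. assert (E2 : d (S m) * (Vm - Vc) = d m * (Vm + Vc)) by lra.
      apply (Rmult_eq_reg_r (Vm - Vc)); [| lra]. rewrite E2. field. lra. }
    assert (HQp : 1 <= Q).
    { rewrite hQ. apply (Rmult_le_reg_r (Vm - Vc)); [lra|].
      unfold Rdiv. rewrite Rmult_assoc, Rinv_l by lra. lra. }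
    split; [| exact Ed].
    split.
    { assert (0 <= Vm * (a m - d m)) by nra.
      destruct (Rle_or_lt 0 (a m - d m)); [lra|]. nra. }
    assert (0 < d (S m)) by (rewrite Ed; nra).
    assert (0 <= Vm * (d (S m) - a m)) by nra.
    assert (0 <= d (S m) - a m).
    { destruct (Rle_or_lt 0 (d (S m) - a m)); auto. nra. }
    lra. }
  assert (Hmain : forall m,
    0 < d (S m) /\ d (S m) = d 1%nat * Q ^ m /\
    exists pr : Riemann_integrable (dtau c v) 0 (d (S m)),
      RiemannInt pr = T1 + sm * (d (S m) - d 1%nat)).
  { induction m as [|m IH].
    - split; [exact hd1pos|]. split; [simpl; ring|].
      assert (Hf : forall x, 0 < x < d 1%nat -> dtau c v x = sc).
      { intros x Hx. unfold dtau, sc. rewrite hv0 by lra. reflexivity. }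
      exists (const_open_integrable _ _ _ sc (Rlt_le _ _ hd1pos) Hf).
      rewrite (const_open_int _ _ _ sc _ (Rlt_le _ _ hd1pos) Hf).
      rewrite <- hd1. unfold sc. ring.
    - destruct IH as [Hp [HE [pr Hpr]]].
      destruct (hstep (S m) ltac:(lia) Hp) as [[H1 H2] H3].
      assert (HQp : 0 < Q).
      { rewrite hQ. apply Rdiv_lt_0_compat; lra. }
      split; [rewrite H3; nra|].
      split; [rewrite H3, HE; simpl; ring|].
      assert (Hle : d (S m) <= d (S (S m))) by lra.
      assert (Hf : forall x, d (S m) < x < d (S (S m)) -> dtau c v x = sm).
      { intros x Hx. unfold dtau, sm. destruct (Rlt_or_le x (a (S m))).
        - rewrite (hv1 (S m) x) by (lia || lra). replace ((- Vm) ^ 2) with (Vm ^ 2) by ring. reflexivity.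
        - rewrite (hv2 (S m) x) by (lia || lra). reflexivity. }
      pose (pr2 := const_open_integrable _ _ _ sm Hle Hf).
      exists (RiemannInt_P24 pr pr2).
      rewrite <- (RiemannInt_P26 pr pr2).
      rewrite Hpr, (const_open_int _ _ _ sm pr2 Hle Hf). ring. }
  destruct n as [|m]; [lia|].
  destruct (Hmain m) as [_ [HE [pr Hpr]]].
  exists pr. rewrite Hpr, HE.
  replace (S m - 1)%nat with m by lia.
  fold Q. unfold rho. fold sm. fold sc. rewrite <- hd1. fold sc.
  field. lra.
Qed.
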